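(* Let $X',X''$ be a disjoint cover of an index set $X$ (with nonempty value sets for each index), $\Pi':=\Pi X'$, $\Pi'':=\Pi X''$. Suppose that for every set $A$ (among subsets of $\Pi'$, $\Pi''$ and $\Pi' \times\Pi''$) a notion ''big subset of $A$'' is given such that $A\subseteq A$ is big and, whenever $B\subseteq C\subseteq A$ and $B\subseteq A$ is big, $C\subseteq A$ is big; call $B\subseteq A$ small iff $A-B\subseteq A$ is big. Assume (S*1): for all $\Sigma'\subseteq\Pi'$, $\Sigma''\subseteq\Pi''$ and $\Delta\subseteq\Sigma'\times\Sigma''$, $\Delta\subseteq\Sigma'\times\Sigma''$ is big iff there are $\Gamma'\subseteq\Sigma'$ big and $\Gamma''\subseteq\Sigma''$ big with $\Gamma'\times\Gamma''\subseteq\Delta$. Then for all $\Gamma'\subseteq\Sigma'\subseteq\Pi'$ and $\Gamma''\subseteq\Sigma''\subseteq\Pi''$: $\Gamma'\times\Gamma''\subseteq\Sigma'\times\Sigma''$ is small iff $\Gamma'\subseteq\Sigma'$ is small or $\Gamma''\subseteq\Sigma''$ is small.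
   Context: $\Pi X$ denotes the product of the value sets over the indices in $X$; $\Pi X=\Pi X'\times\Pi X''$ up to re-ordering. *)

(* Defs.v *)
From mathcomp Require Import all_boot.
From mathcomp Require Export boolp classical_sets.
Set Implicit Arguments. Unset Strict Implicit. Unset Printing Implicit Defensive.
Local Open Scope classical_set_scope.

Definition PiX (X : Type) (V : X -> Type) (S : set X) : Type :=
  forall i : {x : X | S x}, V (proj1_sig i).

(* A "bigness" notion on a type T: big A B means "B ⊆ A is big". *)
Definition bigness (T : Type) (big : set T -> set T -> Prop) : Prop :=
  (forall A : set T, big A A) /\
  (forall A B C : set T, B `<=` C -> C `<=` A -> big A B -> big A C).

Definition small (T : Type) (big : set T -> set T -> Prop) (A B : set T) : Prop :=
  big A (A `\` B).

(* Main.v *)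
Require Import Defs.
From mathcomp Require Import all_boot.
From mathcomp Require Import boolp classical_sets.
Local Open Scope classical_set_scope.

Theorem fact4p3 (X : Type) (V : X -> Type) (X' X'' : set X)
  (hdisj : X' `&` X'' = set0) (hcover : X' `|` X'' = setT)
  (hne : forall x : X, inhabited (V x))
  (big1 : set (PiX V X') -> set (PiX V X') -> Prop)
  (big2 : set (PiX V X'') -> set (PiX V X'') -> Prop)
  (big12 : set (PiX V X' * PiX V X'') -> set (PiX V X' * PiX V X'') -> Prop)
  (hb1 : bigness big1) (hb2 : bigness big2) (hb12 : bigness big12)
  (S1 : forall (Sig1 : set (PiX V X')) (Sig2 : set (PiX V X''))
          (Delta : set (PiX V X' * PiX V X'')),
      Delta `<=` Sig1 `*` Sig2 ->
      (big12 (Sig1 `*` Sig2) Delta <->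
       exists (Gam1 : set (PiX V X')) (Gam2 : set (PiX V X'')),
         [/\ Gam1 `<=` Sig1, big1 Sig1 Gam1, Gam2 `<=` Sig2, big2 Sig2 Gam2
           & Gam1 `*` Gam2 `<=` Delta])) :
  forall (Gam1 Sig1 : set (PiX V X')) (Gam2 Sig2 : set (PiX V X'')),
    Gam1 `<=` Sig1 -> Gam2 `<=` Sig2 ->
    (small big12 (Sig1 `*` Sig2) (Gam1 `*` Gam2) <->
     small big1 Sig1 Gam1 \/ small big2 Sig2 Gam2).
Proof.
move=> Gam1 Sig1 Gam2 Sig2 hG1 hG2.
have [hr1 hu1] := hb1; have [hr2 hu2] := hb2.
rewrite /small.
have hsub : (Sig1 `*` Sig2) `\` (Gam1 `*` Gam2) `<=` Sig1 `*` Sig2.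
  by move=> z [].
rewrite (S1 _ _ _ hsub); split.
- move=> [G1 [G2 [s1 b1 s2 b2 hG]]].
  case: (pselect (exists a, G1 a /\ Gam1 a)) => [[a [Ga1 Ga]]|hn].
  + right; apply: (hu2 _ G2) => //.
    move=> b Gb; split; first exact: s2.
    move=> Gb2; have := hG (a, b) (conj Ga1 Gb).
    by move=> [_ /=]; apply; split.
  + left; apply: (hu1 _ G1) => //.
    move=> a Ga; split; first exact: s1.
    by move=> Ga'; apply: hn; exists a.
- have hs1 : Sig1 `\` Gam1 `<=` Sig1 by move=> a [].
  have hs2 : Sig2 `\` Gam2 `<=` Sig2 by move=> a [].
  move=> [h|h].
  + exists (Sig1 `\` Gam1), Sig2; split => //; try exact: hr2.
    by move=> [a b] [[Sa nGa] Sb] /=; split; [split|move=> [? ?]].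
  + exists Sig1, (Sig2 `\` Gam2); split => //; try exact: hr1.
    by move=> [a b] [Sa [Sb nGb]] /=; split; [split|move=> [? ?]].
Qed.
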